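(* Let $\mathcal H$ be a family of graphs. The following are equivalent: (i) there is a constant $c=c(\mathcal H)$ such that every connected $\mathcal H$-free graph $G$ has fewer than $c$ vertices of degree at least $2$; (ii) there is a positive integer $n$ such that $\mathcal H\le \{K_n,\ P_n,\ K_{1,n}^*,\ K_{2,n},\ K_2+nK_1,\ K_1+nK_2\}$.
   Context: All graphs are finite, simple, undirected. For graphs $H_1,H_2$, write $H_1\prec H_2$ if $H_2$ contains an induced subgraph isomorphic to $H_1$. A graph $G$ is $\mathcal H$-free if no $H\in\mathcal H$ satisfies $H\prec G$. For families $\mathcal H_1,\mathcal H_2$, write $\mathcal H_1\le\mathcal H_2$ if for every $H_2\in\mathcal H_2$ there is $H_1\in\mathcal H_1$ with $H_1\prec H_2$. $K_n$, $E_n$, $P_n$ are the complete graph, edgeless graph, and path on $n$ vertices; $K_{s,t}$ is the complete bipartite graph; $nG$ is the disjoint union of $n$ copies of $G$; $G_1+G_2$ is the join (disjoint union plus all edges between $V(G_1)$ and $V(G_2)$). $K_{1,n}^*$ is the graph obtained from the star $K_{1,n}$ by attaching a new pendant vertex to each leaf. *)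

(* Defs.v *)
From mathcomp Require Import all_boot.
Set Implicit Arguments. Unset Strict Implicit. Unset Printing Implicit Defensive.

Record graph := Graph {
  gn : nat;
  gadj : rel 'I_gn;
  gadj_sym : symmetric gadj;
  gadj_irr : irreflexive gadj }.

Definition mk_adj (n : nat) (f : nat -> nat -> bool) : rel 'I_n :=
  fun i j => (i != j) && (f i j || f j i).

Lemma mk_adj_sym n f : symmetric (@mk_adj n f).
Proof. by move=> i j; rewrite /mk_adj eq_sym orbC. Qed.

Lemma mk_adj_irr n f : irreflexive (@mk_adj n f).
Proof. by move=> i; rewrite /mk_adj eqxx. Qed.

Definition mkgraph (n : nat) (f : nat -> nat -> bool) : graph :=
  @Graph n (@mk_adj n f) (@mk_adj_sym n f) (@mk_adj_irr n f).

Definition induced (H1 H2 : graph) : Prop :=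
  exists f : 'I_(gn H1) -> 'I_(gn H2),
    injective f /\ forall x y, @gadj H2 (f x) (f y) = @gadj H1 x y.

Definition Hfree (H : graph -> Prop) (G : graph) : Prop :=
  forall F, H F -> ~ induced F G.

Definition famle (H1 H2 : graph -> Prop) : Prop :=
  forall G2, H2 G2 -> exists2 G1, H1 G1 & induced G1 G2.

Definition connected (G : graph) : Prop :=
  forall x y : 'I_(gn G), connect (@gadj G) x y.

Definition degree (G : graph) (x : 'I_(gn G)) : nat :=
  #|[set y | @gadj G x y]|.

Definition num_deg_ge2 (G : graph) : nat :=
  #|[set x : 'I_(gn G) | 1 < degree x]|.

Definition Kn (n : nat) : graph := mkgraph n (fun _ _ => true).
Definition Pn (n : nat) : graph := mkgraph n (fun i j => i.+1 == j).
(* K_{1,n}^* : center 0, leaves 1..n, pendant vertex i+n attached to leaf i *)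
Definition Kstar (n : nat) : graph :=
  mkgraph (n.*2.+1)
    (fun i j => ((i == 0) && (1 <= j <= n)) || ((1 <= i <= n) && (j == i + n))).
(* K_{2,n} : parts {0,1} and {2,...,n+1} *)
Definition K2n (n : nat) : graph :=
  mkgraph (n.+2) (fun i j => (i < 2) && (2 <= j)).
(* K_2 + nK_1 : vertices 0,1 adjacent to each other and to all of 2..n+1 *)
Definition K2_join_nK1 (n : nat) : graph :=
  mkgraph (n.+2) (fun i j => i < 2).
(* K_1 + nK_2 : vertex 0 universal, edges {2k+1, 2k+2} for k < n *)
Definition K1_join_nK2 (n : nat) : graph :=
  mkgraph (n.*2.+1)
    (fun i j => (i == 0) || ((0 < i) && (0 < j) && ((i.-1)./2 == (j.-1)./2))).

Definition six_family (n : nat) : graph -> Prop :=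
  fun G => G = Kn n \/ G = Pn n \/ G = Kstar n \/ G = K2n n \/
           G = K2_join_nK1 n \/ G = K1_join_nK2 n.

(* Main.v *)
Require Import Defs.
From mathcomp Require Import all_boot.
From mathcomp Require Import zify.
From Stdlib Require Import Classical.
Set Implicit Arguments. Unset Strict Implicit. Unset Printing Implicit Defensive.

Definition cliqueS (T : finType) (r : rel T) (B : {set T}) :=
  {in B &, forall x y, x != y -> r x y}.
Definition indepS (T : finType) (r : rel T) (B : {set T}) :=
  {in B &, forall x y, x != y -> ~~ r x y}.

Lemma ramsey_aux (T : finType) (r : rel T) (rs : symmetric r) s :
  forall a b (A : {set T}), a + b <= s -> 2 ^ (a + b) <= #|A| ->
  (exists2 B : {set T}, B \subset A & #|B| = a /\ cliqueS r B) \/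
  (exists2 B : {set T}, B \subset A & #|B| = b /\ indepS r B).
Proof.
elim: s => [|s IH] a b A hs hA.
  left; exists set0; first exact: sub0set.
  have -> : a = 0 by lia.
  by split; [rewrite cards0 | move=> x y; rewrite in_set0].
case: a hs hA => [|a] hs hA.
  left; exists set0; first exact: sub0set.
  by split; [rewrite cards0 | move=> x y; rewrite in_set0].
case: b hs hA => [|b] hs hA.
  right; exists set0; first exact: sub0set.
  by split; [rewrite cards0 | move=> x y; rewrite in_set0].
have : 0 < #|A|.
  by apply: leq_trans hA; rewrite expn_gt0.
case/card_gt0P => x xA.
set A' := A :\ x.
set N := A' :&: [set y | r x y].
set M := A' :\: [set y | r x y].
have hNM : #|N| + #|M| = #|A| - 1.
  by rewrite /N /M cardsID /A' (cardsD1 x A) xA /=; lia.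
have e1 : 2 ^ (a.+1 + b.+1) = 2 ^ (a + b.+1) + 2 ^ (a.+1 + b).
  by rewrite !addSn !addnS !expnS; lia.
have sA' : A' \subset A by apply: subD1set.
have [hN|hM] : 2 ^ (a + b.+1) <= #|N| \/ 2 ^ (a.+1 + b) <= #|M|.
  have : 2 ^ (a + b.+1) + 2 ^ (a.+1 + b) <= #|N| + #|M| + 1 by lia.
  rewrite !addSn !addnS !expnS; lia.
- have [[B sB [cB clB]]|[B sB [cB inB]]] := IH a b.+1 N ltac:(lia) hN.
  + left; exists (x |: B).
      apply/subsetP => y; rewrite in_setU1 => /orP [/eqP -> //|yB].
      by move/subsetP: sB => /(_ y yB); rewrite !inE => /andP [] /andP [].
    have xB : x \notin B.
      apply/negP => /(subsetP sB); by rewrite !inE eqxx.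
    split; first by rewrite cardsU1 xB cB.
    have hB : forall y, y \in B -> r x y.
      by move=> y /(subsetP sB); rewrite !inE => /andP [].
    move=> y z; rewrite !in_setU1 => /orP [/eqP ->|yB] /orP [/eqP ->|zB].
    * by rewrite eqxx.
    * by move=> _; apply: hB.
    * by move=> _; rewrite rs; apply: hB.
    * by apply: clB.
  + right; exists B => //; apply: subset_trans sB _.
    exact: subset_trans (subsetIl _ _) sA'.
- have [[B sB [cB clB]]|[B sB [cB inB]]] := IH a.+1 b M ltac:(lia) hM.
  + left; exists B => //; apply: subset_trans sB _.
    exact: subset_trans (subsetDl _ _) sA'.
  + right; exists (x |: B).
      apply/subsetP => y; rewrite in_setU1 => /orP [/eqP -> //|yB].
      by move/subsetP: sB => /(_ y yB); rewrite !inE => /andP [] _ /andP [].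
    have xB : x \notin B.
      apply/negP => /(subsetP sB); by rewrite !inE eqxx andbF.
    split; first by rewrite cardsU1 xB cB.
    have hB : forall y, y \in B -> ~~ r x y.
      by move=> y /(subsetP sB); rewrite !inE => /andP [].
    move=> y z; rewrite !in_setU1 => /orP [/eqP ->|yB] /orP [/eqP ->|zB].
    * by rewrite eqxx.
    * by move=> _; apply: hB.
    * by move=> _; rewrite rs; apply: hB.
    * by apply: inB.
Qed.

Lemma ramsey (T : finType) (r : rel T) (rs : symmetric r) a b (A : {set T}) :
  2 ^ (a + b) <= #|A| ->
  (exists2 B : {set T}, B \subset A & #|B| = a /\ cliqueS r B) \/
  (exists2 B : {set T}, B \subset A & #|B| = b /\ indepS r B).
Proof. exact: (@ramsey_aux T r rs (a + b)). Qed.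

Lemma adj_mk N f (x y : 'I_N) : @gadj (mkgraph N f) x y = (x != y) && (f x y || f y x).
Proof. by []. Qed.

Lemma induced_trans A B C : induced A B -> induced B C -> induced A C.
Proof.
move=> [f [fi fa]] [g [gi ga]]; exists (g \o f); split.
  exact: inj_comp.
by move=> x y /=; rewrite ga fa.
Qed.

Lemma embed_mk N f (G : graph) (h : nat -> 'I_(gn G)) :
  (forall i j, i < N -> j < N -> h i = h j -> i = j) ->
  (forall i j, i < N -> j < N -> i != j -> @gadj G (h i) (h j) = f i j || f j i) ->
  induced (mkgraph N f) G.
Proof.
move=> hi ha; exists (fun x : 'I_N => h x); split.
  by move=> x y /(hi _ _ (ltn_ord x) (ltn_ord y)) /val_inj.
move=> x y; rewrite adj_mk /=.
have [->|nxy] := eqVneq x y; first by rewrite gadj_irr.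
by rewrite ha.
Qed.

Lemma enum_nth (T : finType) (B : {set T}) (x0 : T) :
  (forall i, i < #|B| -> nth x0 (enum B) i \in B) /\
  (forall i j, i < #|B| -> j < #|B| -> nth x0 (enum B) i = nth x0 (enum B) j -> i = j).
Proof.
split.
  by move=> i hi; rewrite -mem_enum mem_nth // -cardE.
move=> i j hi hj /eqP; rewrite nth_uniq ?enum_uniq // -?cardE //.
by move/eqP.
Qed.

Definition forb n G := forall F, six_family n F -> ~ induced F G.


Lemma kn_emb (G : graph) n (x0 : 'I_(gn G)) (B : {set 'I_(gn G)}) :
  #|B| = n -> cliqueS (@gadj G) B -> induced (Kn n) G.
Proof.
move=> cB clB; have [gB gI] := enum_nth B x0; rewrite cB in gB gI.
apply: (@embed_mk n _ G (fun i => nth x0 (enum B) i)) => // i j hi hj nij.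
rewrite orbT; apply: clB; try exact: gB.
by apply/negP => /eqP /(gI _ _ hi hj) /eqP; rewrite (negbTE nij).
Qed.

Lemma hub_emb (G : graph) n (a b : 'I_(gn G)) (L : {set 'I_(gn G)}) :
  a != b -> #|L| = n -> a \notin L -> b \notin L -> indepS (@gadj G) L ->
  {in L, forall y, @gadj G a y && @gadj G b y} ->
  induced (K2n n) G \/ induced (K2_join_nK1 n) G.
Proof.
move=> nab cL aL bL inL hL.
have [gL gI] := enum_nth L a; rewrite cL in gL gI.
set g := fun i => nth a (enum L) i in gL gI.
pose h i := match i with 0 => a | 1 => b | i.+2 => g i end.
have hinj : forall i j, i < n.+2 -> j < n.+2 -> h i = h j -> i = j.
  move=> [|[|i]] [|[|j]] //= hi hj.
  - by move/eqP; rewrite (negbTE nab).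
  - by move=> e; move: (gL j ltac:(lia)); rewrite -/(g j) -e (negbTE aL).
  - by move/esym/eqP; rewrite (negbTE nab).
  - by move=> e; move: (gL j ltac:(lia)); rewrite -/(g j) -e (negbTE bL).
  - by move=> e; move: (gL i ltac:(lia)); rewrite -/(g i) e (negbTE aL).
  - by move=> e; move: (gL i ltac:(lia)); rewrite -/(g i) e (negbTE bL).
  - by move/(gI i j ltac:(lia) ltac:(lia)) ->.
have adjb : forall i, i < n -> @gadj G a (g i) /\ @gadj G b (g i).
  by move=> i hi; have /andP [] := hL _ (gL i hi).
have hind : forall i j, i < n -> j < n -> i != j -> ~~ @gadj G (g i) (g j).
  move=> i j hi hj nij; apply: inL; try exact: gL.
  by apply/negP => /eqP /(gI _ _ hi hj) /eqP; rewrite (negbTE nij).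
case hab: (@gadj G a b); [right|left].
- apply: (@embed_mk n.+2 _ G h hinj) => -[|[|i]] [|[|j]] //= hi hj nij;
  first [ by rewrite ?hab | by rewrite gadj_sym ?hab
        | (have [h1 h2] := adjb j ltac:(lia); by rewrite ?h1 ?h2)
        | (have [h1 h2] := adjb i ltac:(lia); by rewrite gadj_sym ?h1 ?h2)
        | by apply/negbTE/hind; lia ].
- apply: (@embed_mk n.+2 _ G h hinj) => -[|[|i]] [|[|j]] //= hi hj nij;
  first [ by rewrite ?hab | by rewrite gadj_sym ?hab
        | (have [h1 h2] := adjb j ltac:(lia); by rewrite ?h1 ?h2)
        | (have [h1 h2] := adjb i ltac:(lia); by rewrite gadj_sym ?h1 ?h2)
        | by apply/negbTE/hind; lia ].
Qed.

Lemma case_k1 n i : i < n.*2.+1 -> i = 0 \/ (exists2 k, k < n & i = k.*2.+1)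
                       \/ (exists2 k, k < n & i = k.*2.+2).
Proof.
move=> hi; case: i hi => [|i] hi; first by left.
right; case/boolP: (odd i) => oi.
  by right; exists i./2; [lia|lia].
by left; exists i./2; [lia|lia].
Qed.

Lemma case_ks n i : i < n.*2.+1 -> i = 0 \/ (exists2 k, k < n & i = k.+1)
                       \/ (exists2 k, k < n & i = (k + n).+1).
Proof.
move=> hi; case: i hi => [|i] hi; first by left.
right; case: (leqP i.+1 n) => oi.
  by left; exists i; [lia|lia].
by right; exists (i - n); [lia|lia].
Qed.

Lemma star_emb (G : graph) n (v : 'I_(gn G)) (w : 'I_(gn G) -> 'I_(gn G))
  (I : {set 'I_(gn G)}) (beta : bool) :
  #|I| = n -> v \notin I -> indepS (@gadj G) I -> {in I, forall u, @gadj G v u} ->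
  {in I, forall u, w u != v} ->
  {in I &, forall u u', @gadj G (w u) u' = (u == u')} ->
  {in I &, forall u u', u != u' -> ~~ @gadj G (w u) (w u')} ->
  {in I, forall u, @gadj G v (w u) = beta} ->
  induced (if beta then K1_join_nK2 n else Kstar n) G.
Proof.
move=> cI vI inI vadj wv wadj ww vw.
have [gL gI] := enum_nth I v; rewrite cI in gL gI.
pose g k := nth v (enum I) k.
have Egg : forall k l, k < n -> l < n -> @gadj G (g k) (g l) = false.
  move=> k l hk hl; have [->|nkl] := eqVneq k l; first by rewrite gadj_irr.
  apply/negbTE/inI; try exact: gL.
  by apply/negP => /eqP /(gI _ _ hk hl) /eqP; rewrite (negbTE nkl).
have Eww : forall k l, k < n -> l < n -> @gadj G (w (g k)) (w (g l)) = false.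
  move=> k l hk hl; have [->|nkl] := eqVneq k l; first by rewrite gadj_irr.
  apply/negbTE/ww; try exact: gL.
  by apply/negP => /eqP /(gI _ _ hk hl) /eqP; rewrite (negbTE nkl).
have Ewg : forall k l, k < n -> l < n -> @gadj G (w (g k)) (g l) = (k == l).
  move=> k l hk hl; rewrite wadj ?gL //.
  apply/eqP/eqP => [/(gI _ _ hk hl) //|-> //].
have Egw : forall k l, k < n -> l < n -> @gadj G (g l) (w (g k)) = (k == l).
  by move=> k l hk hl; rewrite gadj_sym Ewg.
have Evg : forall k, k < n -> @gadj G v (g k) = true.
  by move=> k hk; rewrite vadj ?gL.
have Egv : forall k, k < n -> @gadj G (g k) v = true.
  by move=> k hk; rewrite gadj_sym Evg.
have Evw : forall k, k < n -> @gadj G v (w (g k)) = beta.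
  by move=> k hk; rewrite vw ?gL.
have Ewv : forall k, k < n -> @gadj G (w (g k)) v = beta.
  by move=> k hk; rewrite gadj_sym Evw.
have Evv : @gadj G v v = false by rewrite gadj_irr.
have Dvg : forall k, k < n -> v <> g k.
  by move=> k hk e; move: (gL k hk); rewrite -/(g k) -e (negbTE vI).
have Dvw : forall k, k < n -> v <> w (g k).
  by move=> k hk e; move: (wv _ (gL k hk)); rewrite -/(g k) -e eqxx.
have Dgw : forall k l, k < n -> l < n -> g k <> w (g l).
  by move=> k l hk hl e; have := Ewg l l hl hl; rewrite eqxx -e Egg.
have Igg : forall k l, k < n -> l < n -> g k = g l -> k = l.
  by move=> k l hk hl /(gI _ _ hk hl).
have Iww : forall k l, k < n -> l < n -> w (g k) = w (g l) -> k = l.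
  move=> k l hk hl e; have := Ewg k l hk hl; rewrite e Ewg //.
  by rewrite eqxx => /esym/eqP.
case: beta Evw Ewv vw => Evw Ewv vw.
-
  pose h i := if i == 0 then v else if odd i then g (i.-1)./2 else w (g (i.-1)./2).
  have hc := @case_k1 n.
  have h1 : forall k, h k.*2.+1 = g k.
    by move=> k; rewrite /h /= odd_double /= doubleK.
  have h2 : forall k, h k.*2.+2 = w (g k).
    by move=> k; rewrite /h /= odd_double /= uphalf_double.
  apply: (@embed_mk n.*2.+1 _ G h).
  + move=> i j hi hj.
    case: (hc i hi) => [->|[[k hk ->]|[k hk ->]]];
    case: (hc j hj) => [->|[[l hl ->]|[l hl ->]]];
    rewrite ?h1 ?h2 /h /=; move=> e //;
    first [ by case: (Dvg _ hk (esym e)) | by case: (Dvg _ hl e)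
          | by case: (Dvw _ hk (esym e)) | by case: (Dvw _ hl e)
          | by case: (Dgw _ _ hk hl e) | by case: (Dgw _ _ hl hk (esym e))
          | by rewrite (Igg _ _ hk hl e) | by rewrite (Iww _ _ hk hl e) ].
  + move=> i j hi hj nij.
    case: (hc i hi) => [ei|[[k hk ei]|[k hk ei]]];
    case: (hc j hj) => [ej|[[l hl ej]|[l hl ej]]]; subst i j;
    rewrite ?h1 ?h2 /h /= ?Evg ?Egv ?Evw ?Ewv ?Egg ?Eww ?Ewg ?Egw ?doubleK ?uphalf_double //;
    first [ clear -nij hk hl; lia | clear -nij hk; lia | clear -nij hl; lia | clear -nij; lia ].
-
  pose h i := if i == 0 then v else if i <= n then g i.-1 else w (g (i - n.+1)).
  have hc := @case_ks n.
  have h1 : forall k, k < n -> h k.+1 = g k.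
    by move=> k hk; rewrite /h /= hk.
  have h2 : forall k, h (k + n).+1 = w (g k).
    move=> k; rewrite /h /=.
    by rewrite ltnNge leq_addl /= subSS addnK.
  apply: (@embed_mk n.*2.+1 _ G h).
  + move=> i j hi hj.
    case: (hc i hi) => [->|[[k hk ->]|[k hk ->]]];
    case: (hc j hj) => [->|[[l hl ->]|[l hl ->]]];
    rewrite ?h2 ?h1 // /h /=; move=> e //;
    first [ by case: (Dvg _ hk (esym e)) | by case: (Dvg _ hl e)
          | by case: (Dvw _ hk (esym e)) | by case: (Dvw _ hl e)
          | by case: (Dgw _ _ hk hl e) | by case: (Dgw _ _ hl hk (esym e))
          | by rewrite (Igg _ _ hk hl e) | by rewrite (Iww _ _ hk hl e) ].
  + move=> i j hi hj nij.
    case: (hc i hi) => [ei|[[k hk ei]|[k hk ei]]];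
    case: (hc j hj) => [ej|[[l hl ej]|[l hl ej]]]; subst i j;
    rewrite ?h2 ?h1 // /h /= ?Evg ?Egv ?Evw ?Ewv ?Egg ?Eww ?Ewg ?Egw //;
    first [ clear -nij hk hl; lia | clear -nij hk; lia | clear -nij hl; lia | clear -nij; lia ].
Qed.

Lemma set_min N (B : {set 'I_N}) x0 : x0 \in B ->
  exists2 x, x \in B & forall y, y \in B -> (x <= y)%N.
Proof.
move=> x0B; case: (@arg_minnP _ x0 (fun z => z \in B) (fun i => val i) x0B).
by move=> x xB hx; exists x.
Qed.

Lemma set_max N (B : {set 'I_N}) x0 : x0 \in B ->
  exists2 x, x \in B & forall y, y \in B -> (y <= x)%N.
Proof.
move=> x0B; case: (@arg_maxnP _ x0 (fun z => z \in B) (fun i => val i) x0B).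
by move=> x xB hx; exists x.
Qed.

Definition nl (G : graph) (x : 'I_(gn G)) := 1 < degree x.
Definition nlN (G : graph) (v : 'I_(gn G)) := [set u | @gadj G v u && nl u].

Definition Dn n :=
  let s3 := 2 ^ (n + n).+1 in
  let s2 := 2 ^ (n.+1 + s3) in
  let s1 := 2 ^ (n.+1 + s2) in
  2 ^ (n + s1).

Lemma six1 n : six_family n (Kn n). Proof. by left. Qed.
Lemma six2 n : six_family n (Pn n). Proof. by right; left. Qed.
Lemma six3 n : six_family n (Kstar n). Proof. by right; right; left. Qed.
Lemma six4 n : six_family n (K2n n). Proof. by right; right; right; left. Qed.
Lemma six5 n : six_family n (K2_join_nK1 n). Proof. by do 4 right; left. Qed.
Lemma six6 n : six_family n (K1_join_nK2 n). Proof. by do 5 right. Qed.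

Lemma nl_bound (G : graph) n : forb n G -> forall v : 'I_(gn G), #|nlN v| < Dn n.
Proof.
move=> hF v; rewrite ltnNge; apply/negP => hS.
have noK : forall B : {set 'I_(gn G)}, #|B| = n -> cliqueS (@gadj G) B -> False.
  by move=> B cB cl; apply: (hF _ (six1 n)); apply: (kn_emb v cB cl).
have noHub : forall a b (L : {set 'I_(gn G)}),
  a != b -> #|L| = n -> a \notin L -> b \notin L -> indepS (@gadj G) L ->
  {in L, forall y, @gadj G a y && @gadj G b y} -> False.
  move=> a b L h1 h2 h3 h4 h5 h6.
  case: (hub_emb h1 h2 h3 h4 h5 h6) => hi.
    exact: (hF _ (six4 n) hi).
  exact: (hF _ (six5 n) hi).
have noStar : forall (w : 'I_(gn G) -> 'I_(gn G)) (I : {set 'I_(gn G)}) beta,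
  #|I| = n -> v \notin I -> indepS (@gadj G) I -> {in I, forall u, @gadj G v u} ->
  {in I, forall u, w u != v} ->
  {in I &, forall u u', @gadj G (w u) u' = (u == u')} ->
  {in I &, forall u u', u != u' -> ~~ @gadj G (w u) (w u')} ->
  {in I, forall u, @gadj G v (w u) = beta} -> False.
  move=> w I beta h1 h2 h3 h4 h5 h6 h7 h8.
  have := star_emb h1 h2 h3 h4 h5 h6 h7 h8; case: beta {h8} => hi.
    exact: (hF _ (six6 n) hi).
  exact: (hF _ (six3 n) hi).
have vnl : v \notin nlN v by rewrite inE gadj_irr.
pose w u := odflt u [pick y | @gadj G u y && (y != v)].
have hw : forall u, u \in nlN v -> @gadj G u (w u) && (w u != v).
  move=> u; rewrite inE => /andP [vu nlu]; rewrite /w; case: pickP => [y //|none].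
  exfalso; move: nlu; rewrite /nl /degree ltnNge => /negP; apply.
  rewrite -(cards1 v); apply: subset_leq_card; apply/subsetP => y.
  rewrite !inE => uy; move: (none y); rewrite /= uy /=.
  by move/negbFE.
move: hS; rewrite /Dn.
set s3 := 2 ^ (n + n).+1; set s2 := 2 ^ (n.+1 + s3); set s1 := 2 ^ (n.+1 + s2).
move=> hS.
have [[B _ [cB clB]]|[I sI [cI inI]]] := ramsey (@gadj_sym G) hS.
  exact: (noK B cB clB).
have InlN : forall u, u \in I -> u \in nlN v by move=> u /(subsetP sI).
have wI : forall u, u \in I -> w u \notin I.
  move=> u uI; apply/negP => wuI.
  have /andP [uw _] := hw u (InlN u uI).
  have nuw : u != w u by apply/negP => /eqP e; move: uw; rewrite -e gadj_irr.
  by move: (inI u (w u) uI wuI nuw); rewrite uw.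
pose p1 (u u' : 'I_(gn G)) := if (u < u')%N then @gadj G (w u) u' else @gadj G (w u') u.
have p1s : symmetric p1.
  move=> x y; rewrite /p1; case: (ltngtP x y) => // e.
  by rewrite (val_inj e).
have hI : 2 ^ (n.+1 + s2) <= #|I| by rewrite cI.
have [[B sB [cB clB]]|[I1 sI1 [cI1 inI1]]] := ramsey p1s hI.
  have : 0 < #|B| by rewrite cB.
  case/card_gt0P => x0 x0B; have [x xB hx] := set_min x0B.
  have xI : x \in I by apply: (subsetP sB).
  have /andP [xw wxv] := hw x (InlN x xI).
  apply: (noHub v (w x) (B :\ x)).
  - by rewrite eq_sym.
  - by move: cB; rewrite (cardsD1 x B) xB add1n => -[].
  - by apply/negP => /setD1P [_ /(subsetP sB) /InlN]; rewrite (negbTE vnl).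
  - by apply/negP => /setD1P [_ /(subsetP sB)]; apply/negP/wI.
  - move=> y z /setD1P [_ /(subsetP sB) yI] /setD1P [_ /(subsetP sB) zI].
    exact: inI.
  - move=> y /setD1P [nyx yB].
    have yI : y \in I by apply: (subsetP sB).
    move: (InlN y yI); rewrite inE => /andP [-> _] /=.
    have := clB x y xB yB; rewrite eq_sym nyx => /(_ isT).
    rewrite /p1; have -> : (x < y)%N.
      by rewrite ltn_neqAle hx // andbT; apply: contra nyx => /eqP e; rewrite (val_inj e).
    by [].
pose p2 (u u' : 'I_(gn G)) := if (u < u')%N then @gadj G (w u') u else @gadj G (w u) u'.
have p2s : symmetric p2.
  move=> x y; rewrite /p2; case: (ltngtP x y) => // e.
  by rewrite (val_inj e).
have hI1 : 2 ^ (n.+1 + s3) <= #|I1| by rewrite cI1.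
have I1I : forall u, u \in I1 -> u \in I by move=> u /(subsetP sI1).
have [[B sB [cB clB]]|[I2 sI2 [cI2 inI2]]] := ramsey p2s hI1.
  have : 0 < #|B| by rewrite cB.
  case/card_gt0P => x0 x0B; have [x xB hx] := set_max x0B.
  have xI : x \in I by apply/I1I/(subsetP sB).
  have /andP [xw wxv] := hw x (InlN x xI).
  apply: (noHub v (w x) (B :\ x)).
  - by rewrite eq_sym.
  - by move: cB; rewrite (cardsD1 x B) xB add1n => -[].
  - by apply/negP => /setD1P [_ /(subsetP sB) /I1I /InlN]; rewrite (negbTE vnl).
  - by apply/negP => /setD1P [_ /(subsetP sB) /I1I]; apply/negP/wI.
  - move=> y z /setD1P [_ /(subsetP sB) /I1I yI] /setD1P [_ /(subsetP sB) /I1I zI].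
    exact: inI.
  - move=> y /setD1P [nyx yB].
    have yI : y \in I by apply/I1I/(subsetP sB).
    move: (InlN y yI); rewrite inE => /andP [-> _] /=.
    have := clB y x yB xB; rewrite nyx => /(_ isT).
    rewrite /p2; have -> : (y < x)%N.
      by rewrite ltn_neqAle hx // andbT; apply: contra nyx => /eqP e; rewrite (val_inj e).
    by [].
have I2I : forall u, u \in I2 -> u \in I by move=> u /(subsetP sI2) /I1I.
have I2I1 : forall u, u \in I2 -> u \in I1 by move=> u /(subsetP sI2).
have wadj : {in I2 &, forall u u', @gadj G (w u) u' = (u == u')}.
  move=> u u' uI uI'; have [<-|nuu] := eqVneq u u'.
    by rewrite gadj_sym; case/andP: (hw u (InlN u (I2I u uI))).
  apply/negbTE; case: (ltngtP u u') => h.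
  - by move: (inI1 u u' (I2I1 u uI) (I2I1 u' uI') nuu); rewrite /p1 h.
  - have := inI2 u u' uI uI' nuu; rewrite /p2.
    by rewrite ltnNge (ltnW h).
  - by move: nuu; rewrite (val_inj h) eqxx.
have sub : forall beta (A : {set 'I_(gn G)}), A \subset I2 ->
    {in A, forall u, @gadj G v (w u) = beta} -> 2 ^ (n + n) <= #|A| -> False.
  move=> beta A sA Ab hA.
  have AI2 : forall u, u \in A -> u \in I2 by move=> u /(subsetP sA).
  pose q (u u' : 'I_(gn G)) := @gadj G (w u) (w u').
  have qs : symmetric q by move=> x y; rewrite /q gadj_sym.
  have winj : {in A &, injective w}.
    move=> u u' uA uA' e; apply/eqP; rewrite -(wadj u u' (AI2 u uA) (AI2 u' uA')) e.
    by rewrite gadj_sym; case/andP: (hw u' (InlN u' (I2I u' (AI2 u' uA')))).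
  have [[B sB [cB clB]]|[B sB [cB inB]]] := ramsey qs hA.
    have BA : forall u, u \in B -> u \in A by move=> u /(subsetP sB).
    apply: (noK (w @: B)).
      rewrite card_in_imset ?cB //.
      by move=> x y xB yB; apply: winj; apply: BA.
    move=> x y /imsetP [a aB ->] /imsetP [b bB ->] nab.
    apply: clB => //; by apply: contra nab => /eqP ->.
  have BA : forall u, u \in B -> u \in A by move=> u /(subsetP sB).
  apply: (noStar w B beta cB).
  - by apply/negP => /BA /AI2 /I2I /InlN; rewrite (negbTE vnl).
  - move=> x y xB yB; apply: inI; exact: (I2I _ (AI2 _ (BA _ _))).
  - by move=> u /BA /AI2 /I2I /InlN; rewrite inE => /andP [].
  - by move=> u /BA /AI2 /I2I /InlN /hw /andP [].
  - by move=> u u' /BA /AI2 uI /BA /AI2 uI'; apply: wadj.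
  - exact: inB.
  - by move=> u /BA; apply: Ab.
pose A1 := I2 :&: [set u | @gadj G v (w u)].
pose A0 := I2 :\: [set u | @gadj G v (w u)].
have hsum : #|A1| + #|A0| = s3 by rewrite cardsID cI2.
have : 2 ^ (n + n) <= #|A1| \/ 2 ^ (n + n) <= #|A0|.
  move: hsum; rewrite /s3 expnS; lia.
case=> hA.
- apply: (sub true A1) => //; first exact: subsetIl.
  by move=> u; rewrite !inE => /andP [].
- apply: (sub false A0) => //; first exact: subsetDl.
  by move=> u; rewrite !inE => /andP [] /negbTE.
Qed.

Lemma card_bigcup_leq (T I : finType) (S : {set I}) (F : I -> {set T}) m :
  (forall i, i \in S -> #|F i| <= m) -> #|\bigcup_(i in S) F i| <= #|S| * m.
Proof.
move=> hF; apply: (@leq_trans (\sum_(i in S) #|F i|)).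
  apply: (big_rec2 (fun (A : {set T}) (s : nat) => #|A| <= s)); first by rewrite cards0.
  move=> i A s _ hA; apply: leq_trans (leq_card_setU _ _) _; exact: leq_add.
by rewrite -sum_nat_const; apply: leq_sum.
Qed.

Fixpoint ball (G : graph) (r : 'I_(gn G)) k : {set 'I_(gn G)} :=
  match k with
  | 0 => [set r]
  | k.+1 => ball r k :|: [set y | [exists z in ball r k, @gadj G z y]]
  end.

Lemma ball_S (G : graph) (r : 'I_(gn G)) k : ball r k \subset ball r k.+1.
Proof. exact: subsetUl. Qed.

Lemma ball_mono (G : graph) (r : 'I_(gn G)) i j : i <= j -> ball r i \subset ball r j.
Proof.
move=> hij; rewrite -(subnKC hij); elim: (j - i) => [|d IH]; first by rewrite addn0.
by rewrite addnS; apply: subset_trans IH (ball_S _ _).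
Qed.

Lemma ball_nbr (G : graph) (r : 'I_(gn G)) k z y :
  z \in ball r k -> @gadj G z y -> y \in ball r k.+1.
Proof.
move=> zB zy; rewrite /= in_setU; apply/orP; right.
by rewrite inE; apply/existsP; exists z; rewrite zB.
Qed.

Lemma ball_SP (G : graph) (r : 'I_(gn G)) k y :
  y \in ball r k.+1 -> y \notin ball r k -> exists2 z, z \in ball r k & @gadj G z y.
Proof.
rewrite /= in_setU => /orP [->//|]; rewrite inE => /existsP [z /andP [zB zy]] _.
by exists z.
Qed.

Lemma trace (G : graph) (r : 'I_(gn G)) k : forall y,
  y \in ball r k -> (0 < k -> y \notin ball r k.-1) ->
  exists h : nat -> 'I_(gn G), [/\ h k = y,
    (forall i, i <= k -> h i \in ball r i),
    (forall i, 0 < i <= k -> h i \notin ball r i.-1) &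
    (forall i, i < k -> @gadj G (h i) (h i.+1))].
Proof.
elim: k => [|k IH] y yB hy.
  exists (fun _ => y); split => //.
  - by move=> i; rewrite leqn0 => /eqP ->.
  - by move=> i; case: i.
have yk := hy isT.
have [z zB zy] := ball_SP yB yk.
have zk : 0 < k -> z \notin ball r k.-1.
  move=> k0; apply/negP => zk1; have := ball_nbr zk1 zy; rewrite prednK //.
  by move/negP: yk.
have [h [h1 h2 h3 h4]] := IH z zB zk.
exists (fun i => if i == k.+1 then y else h i); split.
- by rewrite eqxx.
- move=> i; case: eqP => [-> //|ne] hi; apply: h2; lia.
- move=> i; case: eqP => [-> //|ne] hi; apply: h3; lia.
- move=> i hi; have -> : (i == k.+1) = false by lia.
  case: eqP => [e|ne].
    have ei : i = k by lia.
    by rewrite ei h1.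
  apply: h4; lia.
Qed.

Lemma path_emb (G : graph) n (h : nat -> 'I_(gn G)) :
  (forall i j, i < n -> j < n -> h i = h j -> i = j) ->
  (forall i j, i < n -> j < n -> i != j -> @gadj G (h i) (h j) = (i.+1 == j) || (j.+1 == i)) ->
  induced (Pn n) G.
Proof. exact: embed_mk. Qed.

Lemma ball_stable (G : graph) n (r : 'I_(gn G)) : forb n G ->
  ball r n.+1 \subset ball r n.
Proof.
move=> hF; apply/subsetP => y yB; apply/negPn/negP => yn.
have [h [h1 h2 h3 h4]] := @trace G r n.+1 y yB (fun _ => yn).
have hnot : forall i j, i < j <= n.+1 -> h j \notin ball r i.
  move=> i j hij; apply/negP => hjB; move: (h3 j ltac:(lia)); apply/negP/negPn.
  by apply: (subsetP (ball_mono r (_ : i <= j.-1))) hjB; lia.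
have hadj : forall i j, i < j <= n.+1 -> @gadj G (h i) (h j) = (i.+1 == j).
  move=> i j hij; case: eqP => [<-|ne]; first by apply: h4; lia.
  apply/negP => hij'; move: (ball_nbr (h2 i ltac:(lia)) hij').
  by apply/negP/hnot; lia.
apply: (hF _ (six2 n)); apply: (@path_emb G n h).
- move=> i j hi hj e; case: (ltngtP i j) => // hij.
    by move: (hnot i j ltac:(lia)); rewrite -e h2 //; lia.
  by move: (hnot j i ltac:(lia)); rewrite e h2 //; lia.
- move=> i j hi hj nij; case: (ltngtP i j) => hij.
  + rewrite hadj; lia.
  + rewrite gadj_sym hadj; lia.
  + by move: nij; rewrite hij eqxx.
Qed.

Lemma ball_all (G : graph) n (r : 'I_(gn G)) : forb n G -> connected G ->
  forall x, x \in ball r n.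
Proof.
move=> hF hc x.
have cl : closed (@gadj G) (mem (ball r n)).
  have st := ball_stable r hF.
  move=> a b ab; apply/idP/idP => aB.
    exact: (subsetP st) (ball_nbr aB ab).
  rewrite gadj_sym in ab; exact: (subsetP st) (ball_nbr aB ab).
have := closed_connect cl (hc r x).
have rB : r \in ball r n.
  by apply: (subsetP (ball_mono r (leq0n n))); rewrite /= inE.
by move=> e; rewrite -[x \in ball r n]e.
Qed.

Lemma parent (G : graph) (r : 'I_(gn G)) k z :
  z \in ball r k -> z != r -> exists2 z', @gadj G z' z & z' \in ball r k.-1.
Proof.
elim: k z => [|k IH] z; first by rewrite /= inE => ->.
rewrite /= in_setU => /orP [zB nzr|].
  have [z' h1 h2] := IH z zB nzr; exists z' => //.
  by apply: (subsetP (ball_mono r (_ : k.-1 <= k))) h2; lia.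
by rewrite inE => /existsP [z' /andP [h1 h2]] _; exists z'.
Qed.

Lemma deg2 (G : graph) (z a b : 'I_(gn G)) :
  @gadj G z a -> @gadj G z b -> a != b -> nl z.
Proof.
move=> za zb nab; rewrite /nl /degree.
apply: (@leq_trans #|[set a; b]|); first by rewrite cards2 nab.
by apply: subset_leq_card; apply/subsetP => y; rewrite !inE => /orP [] /eqP ->.
Qed.

Lemma bound_main (G : graph) n : forb n G -> connected G ->
  num_deg_ge2 G < (Dn n).+1 ^ n + 1.
Proof.
move=> hF hc.
have [r nlr|none] := pickP (fun x : 'I_(gn G) => nl x); last first.
  rewrite /num_deg_ge2 (_ : [set x | 1 < degree x] = set0) ?cards0 ?addn1 //.
  by apply/setP => x; rewrite !inE; apply/negbTE; move: (none x); rewrite /nl => ->.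
pose NL := [set x : 'I_(gn G) | nl x].
have nonleaf : forall k z y, z \in ball r k -> @gadj G z y -> y \notin ball r k -> nl z.
  move=> k z y zB zy yB; have [->//|nzr] := eqVneq z r.
  have [z' z'z z'B] := parent zB nzr.
  apply: (deg2 zy (_ : @gadj G z z')); first by rewrite gadj_sym.
  apply/negP => /eqP e; move: yB; rewrite e.
  by rewrite (subsetP (ball_mono r (_ : k.-1 <= k)) _ z'B) //; lia.
have step : forall k, #|ball r k.+1 :&: NL| <= #|ball r k :&: NL| * (Dn n).+1.
  move=> k.
  have sub : ball r k.+1 :&: NL \subset
      (ball r k :&: NL) :|: \bigcup_(z in ball r k :&: NL) nlN z.
    apply/subsetP => y; rewrite in_setI => /andP [yB ynl].
    case/boolP: (y \in ball r k) => yk.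
      by rewrite in_setU in_setI yk ynl.
    have [z zB zy] := ball_SP yB yk.
    rewrite in_setU; apply/orP; right; apply/bigcupP; exists z.
      by rewrite in_setI zB inE (nonleaf k z y).
    by rewrite inE zy; rewrite inE in ynl.
  apply: leq_trans (subset_leq_card sub) _.
  apply: leq_trans (leq_card_setU _ _) _.
  rewrite mulnS leq_add2l; apply: card_bigcup_leq => z _.
  exact: ltnW (nl_bound hF z).
have bnd : forall k, #|ball r k :&: NL| <= (Dn n).+1 ^ k.
  elim=> [|k IH].
    by rewrite expn0; apply: leq_trans (subset_leq_card (subsetIl _ _)) _; rewrite cards1.
  apply: leq_trans (step k) _; rewrite expnS mulnC leq_mul2l; apply/orP; right; exact: IH.
rewrite addn1 ltnS; apply: leq_trans (bnd n).
apply: subset_leq_card; apply/subsetP => x; rewrite !inE => hx.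
by rewrite (ball_all r hF hc x).
Qed.

Definition madj (f : nat -> nat -> bool) (a b : nat) := (a != b) && (f a b || f b a).

Lemma adj_madj N f (x y : 'I_N) : @gadj (mkgraph N f) x y = madj f x y.
Proof. by []. Qed.

Lemma conn_mk N f : 0 < N ->
  (forall x, x < N -> x = 0 \/ madj f 0 x \/ exists y, [/\ y < N, madj f 0 y & madj f y x]) ->
  connected (mkgraph N f).
Proof.
move=> N0 hx.
have c0 : forall x : 'I_N, connect (@gadj (mkgraph N f)) (Ordinal N0) x.
  move=> x; case: (hx x (ltn_ord x)) => [e|[a|[y [hy a1 a2]]]].
  - by rewrite (_ : x = Ordinal N0) ?connect0 //; apply: val_inj.
  - by apply: connect1.
  - apply: (connect_trans (y := Ordinal hy)); apply: connect1; [exact: a1|exact: a2].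
have cs : connect_sym (@gadj (mkgraph N f)) by apply: sym_connect_sym; apply: gadj_sym.
move=> x y; apply: (connect_trans (y := Ordinal N0)); last exact: c0.
by rewrite cs; apply: c0.
Qed.

Lemma conn_Pn N : 0 < N -> connected (Pn N).
Proof.
move=> N0.
have c0 : forall k (hk : k < N), connect (@gadj (Pn N)) (Ordinal N0) (Ordinal hk).
  elim=> [|k IH] hk.
    by rewrite (_ : Ordinal hk = Ordinal N0) ?connect0 //; apply: val_inj.
  have hk' : k < N by lia.
  apply: (connect_trans (IH hk')); apply: connect1; rewrite adj_madj /madj /=; lia.
have cs : connect_sym (@gadj (Pn N)) by apply: sym_connect_sym; apply: gadj_sym.
move=> x y; apply: (connect_trans (y := Ordinal N0)).
  by rewrite cs; case: x => x hx; apply: c0.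
by case: y => y hy; apply: c0.
Qed.

Lemma count_lb N f c (g : nat -> nat) :
  (forall i, i < c -> g i < N) -> (forall i j, i < c -> j < c -> g i = g j -> i = j) ->
  (forall i, i < c -> exists a b, [/\ a < N, b < N, a != b, madj f (g i) a & madj f (g i) b]) ->
  c <= num_deg_ge2 (mkgraph N f).
Proof.
move=> hg gi hn.
pose h (i : 'I_c) : 'I_N := Ordinal (hg i (ltn_ord i)).
have hinj : injective h.
  by move=> i j /(congr1 val) /= /(gi _ _ (ltn_ord i) (ltn_ord j)) /val_inj.
rewrite -{1}(card_ord c) -(card_imset _ hinj) /num_deg_ge2.
apply: subset_leq_card; apply/subsetP => x /imsetP [i _ ->]; rewrite inE.
have [a [b [aN bN nab ha hb']]] := hn i (ltn_ord i).
by apply: (@deg2 (mkgraph N f) (h i) (Ordinal aN) (Ordinal bN)).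
Qed.

Lemma six_props c F : six_family (c + 3) F -> connected F /\ c <= num_deg_ge2 F.
Proof.
set n := c + 3.
case=> [->|[->|[->|[->|[->|->]]]]]; split.
- apply: conn_mk => [|x hx]; first lia.
  case: (eqVneq x 0) => [->|nx]; [by left|right; left; rewrite /madj /=; lia].
- apply: (@count_lb _ _ c (fun i => i.+1)) => [i hi|i j hi hj [] //|i hi]; first lia.
  exists 0, i.+2; rewrite /madj /=; split; lia.
- apply: conn_Pn; lia.
- apply: (@count_lb _ _ c (fun i => i.+1)) => [i hi|i j hi hj [] //|i hi]; first lia.
  exists i, i.+2; rewrite /madj /=; split; lia.
- apply: conn_mk => [|x hx]; first lia.
  case: (eqVneq x 0) => [->|nx]; first by left.
  case: (leqP x n) => hxn; first by right; left; rewrite /madj /=; lia.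
  right; right; exists (x - n); rewrite /madj /=; split; lia.
- apply: (@count_lb _ _ c (fun i => i.+1)) => [i hi|i j hi hj [] //|i hi]; first lia.
  exists 0, (i.+1 + n); rewrite /madj /=; split; lia.
- apply: conn_mk => [|x hx]; first lia.
  case: (eqVneq x 0) => [->|nx]; first by left.
  case: (eqVneq x 1) => [->|n1].
    by right; right; exists 2; rewrite /madj /=; split; lia.
  right; left; rewrite /madj /=; lia.
- apply: (@count_lb _ _ c (fun i => i.+2)) => [i hi|i j hi hj [] //|i hi]; first lia.
  exists 0, 1; rewrite /madj /=; split; lia.
- apply: conn_mk => [|x hx]; first lia.
  case: (eqVneq x 0) => [->|nx]; [by left|right; left; rewrite /madj /=; lia].
- apply: (@count_lb _ _ c (fun i => i.+2)) => [i hi|i j hi hj [] //|i hi]; first lia.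
  exists 0, 1; rewrite /madj /=; split; lia.
- apply: conn_mk => [|x hx]; first lia.
  case: (eqVneq x 0) => [->|nx]; [by left|right; left; rewrite /madj /=; lia].
- apply: (@count_lb _ _ c (fun i => i.*2.+1)) => [i hi|i j hi hj [] |i hi]; try lia.
  exists 0, i.*2.+2; rewrite /madj /=; split; lia.
Qed.

Theorem theorem1p4 (H : graph -> Prop) :
  (exists c : nat, forall G : graph,
      connected G -> Hfree H G -> num_deg_ge2 G < c)
  <->
  (exists n : nat, 0 < n /\ famle H (six_family n)).
Proof.
split.
- case=> c hc; exists (c + 3); split; first by rewrite addn3.
  move=> G2 hG2; have [cG ncG] := six_props hG2.
  case: (classic (exists2 G1, H G1 & induced G1 G2)) => // hno; exfalso.
  have hfree : Hfree H G2 by move=> F HF ind; apply: hno; exists F.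
  by move: (hc G2 cG hfree); rewrite ltnNge ncG.
- case=> n [n0 hle]; exists ((Dn n).+1 ^ n + 1) => G hc hfree.
  apply: bound_main => // F sF ind.
  have [G1 HG1 ind1] := hle F sF.
  exact: (hfree G1 HG1 (induced_trans ind1 ind)).
Qed.
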